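(* Let $(X,\delta,c)$ be an accepting automaton over $\Sigma$ and let $\mu\mathrm{PL}(\delta,c)$ be as in the context. For every $x\in X$, the language $L(x,c)=\{u\in\Sigma^\ast\mid\delta(x)(u)\in c\}$ belongs to $\mu\mathrm{PL}(\delta,c)$, i.e. there is a state $\mathcal{U}$ of $\mu\mathrm{PL}(\delta,c)$ with $L(\mathcal{U})=L(x,c)$.
   Context: $\Sigma$ is a finite alphabet, $\Sigma^\ast$ the free monoid with empty word $\epsilon$, $u^r$ the reversal of $u$. An accepting automaton is $(X,\delta,c)$ with $\delta:X\to X^\Sigma$ (extended to words by $\delta(x)(\epsilon)=x$, $\delta(x)(wa)=\delta(\delta(x)(w))(a)$) and $c\subseteq X$. Define $\widehat{\delta}(U)(a)=\{x\mid\delta(x)(a)\in U\}$ for $U\subseteq X$, extended to words, so $\widehat{\delta}(U)(w)=\{x\mid\delta(x)(w^r)\in U\}$. Let $\langle c\rangle=\{\widehat{\delta}(c)(w)\mid w\in\Sigma^\ast\}$ and $u\approx v$ iff $\widehat{\delta}(U)(u)=\widehat{\delta}(U)(v)$ for all $U\in\langle c\rangle$. $\mu\mathrm{PL}(\delta,c)$ has state space $P(\Sigma^\ast/{\approx})$, transition $\widehat{\sigma}(\mathcal{U})(u)=\{[w]\mid[wu^r]\in\mathcal{U}\}$ and final states $\{\mathcal{U}\mid[\epsilon]\in\mathcal{U}\}$; $L(\mathcal{U})=\{u\mid[\epsilon]\in\widehat{\sigma}(\mathcal{U})(u)\}$. *)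

(* Defs.v *)
From mathcomp Require Import all_boot.
Set Implicit Arguments. Unset Strict Implicit. Unset Printing Implicit Defensive.

Section Auto.
Variables (Sigma : finType) (X : Type).
Variable delta : X -> Sigma -> X.

Definition deltaw (x : X) (w : seq Sigma) : X := foldl delta x w.

Definition hdelta1 (U : X -> Prop) (a : Sigma) : X -> Prop :=
  fun x => U (delta x a).

Definition hdelta (U : X -> Prop) (w : seq Sigma) : X -> Prop :=
  foldl hdelta1 U w.

Definition genc (c : X -> Prop) (U : X -> Prop) : Prop :=
  exists w, U = hdelta c w.

Definition approx (c : X -> Prop) (u v : seq Sigma) : Prop :=
  forall U, genc c U -> hdelta U u = hdelta U v.

Definition cls (c : X -> Prop) (w : seq Sigma) : seq Sigma -> Prop :=
  fun v => approx c v w.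

(* states of muPL(delta,c): subsets of Sigma^*/~, i.e. sets of classes *)
Definition muPL_state (c : X -> Prop) (UU : (seq Sigma -> Prop) -> Prop) : Prop :=
  forall C, UU C -> exists w, C = cls c w.

Definition hsigma (c : X -> Prop) (UU : (seq Sigma -> Prop) -> Prop) (u : seq Sigma)
  : (seq Sigma -> Prop) -> Prop :=
  fun C => exists w, C = cls c w /\ UU (cls c (w ++ rev u)).

Definition Lmu (c : X -> Prop) (UU : (seq Sigma -> Prop) -> Prop) : seq Sigma -> Prop :=
  fun u => hsigma c UU u (cls c [::]).

Definition Lxc (c : X -> Prop) (x : X) : seq Sigma -> Prop :=
  fun u => c (deltaw x u).

End Auto.

(* Main.v *)
Require Import Defs.
From mathcomp Require Import all_boot.

Lemma hdelta_rev (Sigma : finType) (X : Type) (delta : X -> Sigma -> X) w :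
  forall (U : X -> Prop) y, hdelta delta U w y = U (deltaw delta y (rev w)).
Proof.
elim: w => [|a w IH] U y //=.
rewrite IH rev_cons /deltaw foldl_rcons //.
Qed.

Lemma cls_hd (Sigma : finType) (X : Type) (delta : X -> Sigma -> X) c v v' :
  cls delta c v = cls delta c v' -> hdelta delta c v = hdelta delta c v'.
Proof.
move=> E.
have : cls delta c v' v' by move=> U _.
rewrite -E => H.
by symmetry; apply: H; exists [::].
Qed.

Theorem mainTheorem7 (Sigma : finType) (X : Type) (delta : X -> Sigma -> X)
  (c : X -> Prop) (x : X) :
  exists UU : (seq Sigma -> Prop) -> Prop,
    muPL_state delta c UU /\
    (forall u : seq Sigma, Lmu delta c UU u <-> Lxc delta c x u).
Proof.
exists (fun C => exists v, C = cls delta c v /\ hdelta delta c v x).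
split.
  by move=> C [v [-> _]]; exists v.
move=> u; split.
  move=> [w [E0 [v [E1 H]]]].
  have Hw := (@cls_hd _ _ delta c _ _) E0.
  have Hv := (@cls_hd _ _ delta c _ _) E1.
  rewrite -Hv /hdelta foldl_cat -/(hdelta delta c w) -Hw /= in H.
  move: H; rewrite /hdelta -/(hdelta delta c (rev u)) hdelta_rev revK; done.
move=> H; exists [::]; split => //.
exists (rev u); split => //.
by rewrite hdelta_rev revK.
Qed.
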